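(* There is no morphism $\pi:\mathbb{P}^1_{\mathbb{C}}\to\mathbb{P}^1_{\mathbb{C}}$ of degree $6$ for which there exist three distinct points $p,q,r\in\mathbb{P}^1$ such that $\pi$ has ramification index $(3,3)$ at $p$, ramification index $(2,2,2)$ at $q$, and ramification index $(3,2,1)$ at $r$.
   Context: A morphism $\pi:\mathbb{P}^1\to\mathbb{P}^1$ is said to have ramification index $(n_1,\dots,n_k)$ at a point $x_0$ if $\pi^{-1}(x_0)$ consists of exactly $k$ points at which $\pi$ has local multiplicities $n_1,\dots,n_k$ (so $n_1+\dots+n_k=\deg\pi$). *)

(* Defs.v *)
From HB Require Import structures.
From mathcomp Require Import all_boot all_order all_algebra.
From mathcomp Require Import complex.
From mathcomp Require Import Rstruct.
Import ComplexField.
From Stdlib Require Rdefinitions.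
Set Implicit Arguments. Unset Strict Implicit. Unset Printing Implicit Defensive.
Import Order.TTheory GRing.Theory Num.Theory.
Local Open Scope ring_scope.

Notation CC := (complex Rdefinitions.R).

(* A point of P^1(C): Some z is the affine point z, None is the point at infinity. *)
Definition P1 := option CC.

(* A morphism P^1 -> P^1 of degree d is given (up to a common nonzero scalar)
   by a pair of coprime polynomials (P, Q) with max(deg P, deg Q) = d; it is the
   map [x0 : x1] |-> [F(x0,x1) : G(x0,x1)] with F, G the degree-d
   homogenisations of P, Q, i.e. affinely z |-> P(z)/Q(z). *)
Definition is_morphism_of_degree (P Q : {poly CC}) (d : nat) : Prop :=
  coprimep P Q /\ maxn (size P) (size Q) = d.+1.

(* The (dehomogenised) equation of the fibre over the target point w:
   for w = a : b*P - a*Q with (a:b) = (a:1), i.e. P - a Q; for w = infinity : Q. *)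
Definition fibre_poly (P Q : {poly CC}) (w : P1) : {poly CC} :=
  match w with
  | Some a => P - a%:P * Q
  | None => Q
  end.

(* Local multiplicity of the morphism (P,Q) of degree d at the source point x,
   counted in the fibre over w (it is 0 iff x is not in the fibre over w):
   the order of vanishing at x of the degree-d binary form b F - a G. *)
Definition local_mult (P Q : {poly CC}) (d : nat) (w x : P1) : nat :=
  match x with
  | Some z => mup z (fibre_poly P Q w)
  | None => subn d (size (fibre_poly P Q w)).-1
  end.

Definition has_ramification (P Q : {poly CC}) (d : nat) (w : P1) (ns : seq nat) : Prop :=
  exists xs : seq P1,
    [/\ uniq xs,
        (forall x : P1, x \in xs <-> (0 < local_mult P Q d w x)%N) &
        perm_eq [seq local_mult P Q d w x | x <- xs] ns].

(* Main.v *)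
Require Import Defs.
From mathcomp Require Import all_boot all_order all_algebra.
From mathcomp Require Import complex Rstruct.
From mathcomp Require Import ring.
Import ComplexField.
Import Order.TTheory GRing.Theory Num.Theory.
Local Open Scope ring_scope.
Lemma natCC_neq0 (n : nat) : (0 < n)%N -> (n%:R : CC) != 0.
Proof. by move=> h; rewrite pnatr_eq0 -lt0n. Qed.

Lemma vander7 (d0 d1 d2 d3 d4 d5 d6 : CC) :
  (forall u : CC, d0 + d1*u + d2*u^+2 + d3*u^+3 + d4*u^+4 + d5*u^+5 + d6*u^+6 = 0) ->
  d0 = 0 /\ d1 = 0 /\ d2 = 0 /\ d3 = 0 /\ d4 = 0 /\ d5 = 0 /\ d6 = 0.
Proof.
pose D := fun u : CC => d0 + d1*u + d2*u^+2 + d3*u^+3 + d4*u^+4 + d5*u^+5 + d6*u^+6.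
move=> H0; have H : forall u, D u = 0 by exact: H0.
have h0 : (1 : CC) * d0 = (1) * D 0 + (0) * D 1 + (0) * D (-1) + (0) * D 2 + (0) * D (-2) + (0) * D 3 + (0) * D (-3) by rewrite /D; ring.
rewrite !H !mulr0 !addr0 in h0.
have h1 : (60 : CC) * d1 = (0) * D 0 + (45) * D 1 + (-45) * D (-1) + (-9) * D 2 + (9) * D (-2) + (1) * D 3 + (-1) * D (-3) by rewrite /D; ring.
rewrite !H !mulr0 !addr0 in h1.
have h2 : (360 : CC) * d2 = (-490) * D 0 + (270) * D 1 + (270) * D (-1) + (-27) * D 2 + (-27) * D (-2) + (2) * D 3 + (2) * D (-3) by rewrite /D; ring.
rewrite !H !mulr0 !addr0 in h2.
have h3 : (48 : CC) * d3 = (0) * D 0 + (-13) * D 1 + (13) * D (-1) + (8) * D 2 + (-8) * D (-2) + (-1) * D 3 + (1) * D (-3) by rewrite /D; ring.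
rewrite !H !mulr0 !addr0 in h3.
have h4 : (144 : CC) * d4 = (56) * D 0 + (-39) * D 1 + (-39) * D (-1) + (12) * D 2 + (12) * D (-2) + (-1) * D 3 + (-1) * D (-3) by rewrite /D; ring.
rewrite !H !mulr0 !addr0 in h4.
have h5 : (240 : CC) * d5 = (0) * D 0 + (5) * D 1 + (-5) * D (-1) + (-4) * D 2 + (4) * D (-2) + (1) * D 3 + (-1) * D (-3) by rewrite /D; ring.
rewrite !H !mulr0 !addr0 in h5.
have h6 : (720 : CC) * d6 = (-20) * D 0 + (15) * D 1 + (15) * D (-1) + (-6) * D 2 + (-6) * D (-2) + (1) * D 3 + (1) * D (-3) by rewrite /D; ring.
rewrite !H !mulr0 !addr0 in h6.
have c : forall (n : nat) (x : CC), (0 < n)%N -> n%:R * x = 0 -> x = 0.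
  by move=> n x hn /eqP; rewrite mulf_eq0 (negbTE (natCC_neq0 n hn)) /= => /eqP.
split; [|split; [|split; [|split; [|split; [|split]]]]].
- by rewrite mul1r in h0.
- exact: (c 60%N).
- exact: (c 360%N).
- exact: (c 48%N).
- exact: (c 144%N).
- exact: (c 240%N).
- exact: (c 720%N).
Qed.
Lemma from_eq (k x y : CC) : y = 0 -> x = k * y -> x = 0.
Proof. by move=> -> ->; rewrite mulr0. Qed.
Arguments from_eq k {x y}.

Lemma mul0_r (c x : CC) : c != 0 -> c * x = 0 -> x = 0.
Proof. by move=> hc /eqP; rewrite mulf_eq0 (negbTE hc) /= => /eqP. Qed.
Arguments mul0_r {c x}.

Lemma core0 (a b c m p q be ga : CC) : a != 0 -> c != 0 ->
 (forall u : CC, b * (m + p * u + q * u^+2 + u^+3)^+2 + a * (1+u)^+3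
                 = c * u^+3 * (u-be)^+2 * (u-ga)) -> be = -1.
Proof.
move=> ha hc H.
have Hd : forall u : CC, (-b * m^+2 - a) + (-2 * b * m * p - 3 * a) * u
  + (-b * (p^+2 + 2 * m * q) - 3 * a) * u^+2 + (-c * be^+2 * ga - b * (2 * m + 2 * p * q) - a) * u^+3
  + (c * (be^+2 + 2 * be * ga) - b * (q^+2 + 2 * p)) * u^+4 + (-c * (2 * be + ga) - 2 * b * q) * u^+5
  + (c - b) * u^+6 = 0.
  move=> u; have Hu := H u.
  transitivity (c * u^+3 * (u-be)^+2 * (u-ga) - (b * (m + p * u + q * u^+2 + u^+3)^+2 + a * (1+u)^+3)).
    ring.
  by rewrite Hu subrr.
have [e0 [e1 [e2 [e3 [e4 [e5 e6]]]]]] := @vander7 _ _ _ _ _ _ _ Hd.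
have hb : b = c by apply/eqP; rewrite eq_sym -subr_eq0 e6.
subst b.
have ea : a = - c * m^+2.
  apply/eqP; rewrite -subr_eq0; apply/eqP; apply: (from_eq (-1) e0); ring.
subst a.
have hm : m != 0 by apply: contraNneq ha => ->; apply/eqP; ring.
have ep : p = 3 * m / 2.
  apply/eqP; rewrite -subr_eq0; apply/eqP.
  apply: (mul0_r (_ : c * m != 0)); first by rewrite mulf_neq0.
  apply: (from_eq (-1/2) e1); by field.
subst p.
have eq : q = 3 * m / 8.
  apply/eqP; rewrite -subr_eq0; apply/eqP.
  apply: (mul0_r (_ : c * m != 0)); first by rewrite mulf_neq0.
  apply: (from_eq (-1/2) e2); by field.
subst q.
have eg : ga = -2 * be - 3 * m / 4.
  apply/eqP; rewrite -subr_eq0; apply/eqP.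
  apply: (mul0_r hc).
  apply: (from_eq (-1) e5); by field.
subst ga.
have E2 : 192 * be^+2 + 96 * m * be + 9 * m^+2 + 192 * m = 0.
  apply: (mul0_r hc); apply: (from_eq (-64) e4); by field.
have E3 : 16 * be^+3 + 6 * m * be^+2 - m^+2 - 16 * m = 0.
  apply: (mul0_r hc); apply: (from_eq 8 e3); by field.
have EF : 8 * be^+2 + (3 * m + 64) * be + 4 * (m + 16) = 0.
  apply: (mul0_r hm).
  have -> : m * (8 * be^+2 + (3 * m + 64) * be + 4 * (m + 16)) =
    (-1/48) * (192 * (16 * be^+3 + 6 * m * be^+2 - m^+2 - 16 * m)
               - 16 * be * (192 * be^+2 + 96 * m * be + 9 * m^+2 + 192 * m)) by field.
  by rewrite E2 E3; ring.
have EG : 8 * (m - 64) * be + (3 * m^+2 + 32 * m - 512) = 0.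
  have -> : 8 * (m - 64) * be + (3 * m^+2 + 32 * m - 512) =
    (1/3) * ((192 * be^+2 + 96 * m * be + 9 * m^+2 + 192 * m)
       - 24 * (8 * be^+2 + (3 * m + 64) * be + 4 * (m + 16))) by field.
  by rewrite E2 EF; ring.
have Em : m = -8.
  have : (m + 8)^+3 = 0.
    have -> : (m + 8)^+3 = (1/512) * (8 * (m - 64)^+2 * (8 * be^+2 + (3 * m + 64) * be + 4 * (m + 16))
      - (8 * (m - 64) * be + (3 * m^+2 + 32 * m - 512)) *
        (8 * (m - 64) * be - (3 * m^+2 + 32 * m - 512) + (3 * m + 64) * (m - 64))) by field.
    by rewrite EF EG; ring.
  move/eqP; rewrite expf_eq0 /= => /eqP h.
  by apply/eqP; rewrite -subr_eq0; apply/eqP; rewrite -h; ring.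
subst m.
apply/eqP; rewrite -subr_eq0; apply/eqP.
apply: (mul0_r (_ : (-576 : CC) != 0)).
  by rewrite oppr_eq0 natCC_neq0.
by apply: (from_eq 1 EG); ring.
Qed.

Lemma core (A B C k u1 v1 u2 v2 u3 v3 uz vz uw vw : CC) :
  A != 0 -> C != 0 -> k != 0 -> u1 != 0 -> u2 != 0 -> u3 != 0 ->
  uz != 0 -> uw != 0 -> vz != 0 ->
  (forall s, C * (k * s - k)^+3 * (uz * s - vz)^+2 * (uw * s - vw)
     = A * s^+3 + B * ((u1 * s - v1) * (u2 * s - v2) * (u3 * s - v3))^+2) -> False.
Proof.
move=> hA hC hk h1 h2 h3 hz hw hvz H.
pose w1 := 1 - v1 / u1; pose w2 := 1 - v2 / u2; pose w3 := 1 - v3 / u3.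
have := @core0 A (B * (u1 * u2 * u3)^+2) (C * k^+3 * uz^+2 * uw)
  (w1 * w2 * w3) (w1 * w2 + w1 * w3 + w2 * w3) (w1 + w2 + w3)
  (vz / uz - 1) (vw / uw - 1) hA.
have hc : C * k^+3 * uz^+2 * uw != 0.
  by rewrite !mulf_neq0 ?expf_neq0.
move=> /(_ hc) h.
have /h e : forall u : CC,
  B * (u1 * u2 * u3)^+2 * (w1 * w2 * w3 + (w1 * w2 + w1 * w3 + w2 * w3) * u
    + (w1 + w2 + w3) * u^+2 + u^+3)^+2 + A * (1+u)^+3
  = C * k^+3 * uz^+2 * uw * u^+3 * (u - (vz / uz - 1))^+2 * (u - (vw / uw - 1)).
  move=> u.
  transitivity (A * (1+u)^+3 + B * ((u1 * (1+u) - v1) * (u2 * (1+u) - v2) * (u3 * (1+u) - v3))^+2).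
    rewrite /w1 /w2 /w3; field; by rewrite h1 h2 h3.
  rewrite -(H (1+u)); field; by rewrite hz hw.
have : vz / uz = 0 by rewrite -[vz / uz](subrK 1) e; ring.
move/eqP; rewrite mulf_eq0 invr_eq0 (negbTE hvz) (negbTE hz) //.
Qed.
Definition hom (F : {poly CC}) (X Y : CC) : CC :=
  \sum_(i < 7) F`_i * X ^+ i * Y ^+ (6 - i).

Lemma hom_lin (F G : {poly CC}) a b X Y :
  hom (a *: F + b *: G) X Y = a * hom F X Y + b * hom G X Y.
Proof.
rewrite /hom !mulr_sumr -big_split; apply: eq_bigr => i _.
rewrite coefD !coefZ /=; ring.
Qed.

Lemma hom_horner (F : {poly CC}) (X Y : CC) : (size F <= 7)%N -> Y != 0 ->
  hom F X Y = Y ^+ 6 * F.[X / Y].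
Proof.
move=> hs hY; rewrite (horner_coef_wide _ hs) mulr_sumr /hom.
apply: eq_bigr => i _.
have hi : (i <= 6)%N by rewrite -ltnS.
have -> : Y ^+ 6 = Y ^+ (6 - i) * Y ^+ i by rewrite -exprD subnK.
rewrite expr_div_n.
have hYi : Y ^+ i != 0 by rewrite expf_neq0.
field; exact: hYi.
Qed.

Lemma hom_Y0 (F : {poly CC}) (X : CC) : hom F X 0 = F`_6 * X ^+ 6.
Proof.
rewrite /hom big_ord_recr /= subnn expr0 mulr1 big1 ?add0r //.
move=> i _; rewrite expr0n /=.
have : (6 - i)%N != 0%N by rewrite subn_eq0 -ltnNge (ltn_ord i).
by move/negbTE => ->; rewrite mulr0.
Qed.

Lemma prod_const_seq (T : Type) (rs : seq T) (a : CC) :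
  \prod_(z <- rs) a = a ^+ size rs.
Proof. elim: rs => [|x rs IH]; by rewrite ?big_nil ?big_cons ?IH ?exprS. Qed.

Lemma hom_prod (c : CC) (rs : seq CC) (X Y : CC) : (size rs <= 6)%N ->
  hom (c *: \prod_(z <- rs) ('X - z%:P)) X Y
  = c * Y ^+ (6 - size rs) * \prod_(z <- rs) (X - z * Y).
Proof.
move=> hs.
have hsz : size (\prod_(z <- rs) ('X - z%:P)) = (size rs).+1 by rewrite size_prod_XsubC.
have [->|hY] := eqVneq Y 0.
  rewrite hom_Y0 coefZ.
  have -> : \prod_(z <- rs) (X - z * 0) = X ^+ size rs.
    by rewrite -prod_const_seq; apply: eq_bigr => z _; rewrite mulr0 subr0.
  case: (ltngtP (size rs) 6) hs => // [hlt _|heq _].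
    rewrite nth_default ?hsz //.
    rewrite expr0n subn_eq0 leqNgt hlt /=; ring.
  have : (\prod_(z <- rs) ('X - z%:P))`_6 = 1.
    have /monicP : \prod_(z <- rs) ('X - z%:P) \is monic by apply: monic_prod_XsubC.
    by rewrite lead_coefE hsz heq.
  by move=> ->; rewrite heq subnn expr0; ring.
rewrite hom_horner; last 2 first.
- by rewrite (leq_trans (size_scale_leq _ _)) // hsz ltnS.
- exact: hY.
rewrite hornerZ horner_prod.
under eq_bigr do rewrite hornerXsubC.
have -> : \prod_(z <- rs) (X - z * Y) = \prod_(z <- rs) (Y * (X / Y - z)).
  by apply: eq_bigr => z _; field.
rewrite big_split /= prod_const_seq.
rewrite -{1}(subnK hs) exprD; ring.
Qed.

Definition lm (F : {poly CC}) (x : P1) : nat :=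
  match x with Some z => mup z F | None => (6 - (size F).-1)%N end.

Lemma local_mult_lm P Q w x : local_mult P Q 6 w x = lm (fibre_poly P Q w) x.
Proof. by case: x. Qed.

Definition ell (x : P1) (X Y : CC) : CC :=
  match x with Some z => X - z * Y | None => Y end.

Lemma prod_ell (l : seq P1) (X Y : CC) :
  \prod_(x <- l) ell x X Y = Y ^+ (count_mem None l) * \prod_(z <- pmap id l) (X - z * Y).
Proof.
elim: l => [|x l IH]; first by rewrite !big_nil expr0 mulr1.
case: x => [z|] /=; rewrite big_cons IH.
  by rewrite big_cons /= add0n mulrCA.
by rewrite add1n exprS /= mulrA.
Qed.

Lemma count_pmap (l : seq P1) (z : CC) :
  count_mem z (pmap id l) = count_mem (Some z) l.
Proof.
elim: l => [|x l IH] //=; case: x => [w|] /=; last by rewrite IH.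
by rewrite IH.
Qed.

Lemma hom_fact (F : {poly CC}) (l : seq P1) : F != 0 -> (size F <= 7)%N ->
  (forall y, count_mem y l = lm F y) ->
  forall X Y, hom F X Y = lead_coef F * \prod_(x <- l) ell x X Y.
Proof.
move=> hF hs hl X Y.
have [rs Hrs] := closed_field_poly_normal F.
have hlc : lead_coef F != 0 by rewrite lead_coef_eq0.
have hsz : size F = (size rs).+1.
  by rewrite {1}Hrs size_scale // size_prod_XsubC.
have hmup : forall z, mup z F = count_mem z rs.
  move=> z; rewrite {1}Hrs -mul_polyC mupMr ?mu_prod_XsubC //.
  by rewrite rootC.
have hperm : perm_eq (pmap id l) rs.
  apply/allP => z _; apply/eqP.
  by rewrite count_pmap hl /= hmup.
rewrite prod_ell (perm_big _ hperm) hl /= hsz /=.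
rewrite {1}Hrs hom_prod; first by ring.
by rewrite -ltnS -hsz.
Qed.

Definition mlist (xs : seq P1) (m : P1 -> nat) : seq P1 :=
  flatten [seq nseq (m x) x | x <- xs].

Lemma count_mlist0 (xs : seq P1) m y : uniq xs ->
  count_mem y (mlist xs m) = ((y \in xs) * m y)%N.
Proof.
elim: xs => [|x xs IH] //= /andP[hx hu].
rewrite count_cat IH // count_nseq inE /=.
have [->|hne] := eqVneq y x.
  by rewrite (negbTE hx) inE eqxx /= mul0n addn0.
by rewrite inE (negbTE hne).
Qed.

Lemma count_mlist (xs : seq P1) m y : uniq xs ->
  (y \notin xs -> m y = 0%N) -> count_mem y (mlist xs m) = m y.
Proof.
move=> hu h; rewrite count_mlist0 //.
case: (boolP (y \in xs)) => hy; first by rewrite mul1n.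
by rewrite mul0n h.
Qed.
Set Implicit Arguments. Unset Strict Implicit. Unset Printing Implicit Defensive.
Lemma fibre_size (P Q : {poly CC}) w : is_morphism_of_degree P Q 6 ->
  (size (fibre_poly P Q w) <= 7)%N.
Proof.
move=> [_ hm].
have hP : (size P <= 7)%N by rewrite -hm leq_maxl.
have hQ : (size Q <= 7)%N by rewrite -hm leq_maxr.
case: w => [a|] //=.
rewrite (leq_trans (size_add _ _)) // geq_max hP size_opp mul_polyC.
exact: leq_trans (size_scale_leq _ _) hQ.
Qed.

Lemma no_common (P Q : {poly CC}) z : coprimep P Q -> P.[z] = 0 -> Q.[z] = 0 -> False.
Proof.
move=> hc hP hQ.
have hr : root P z by apply/eqP.
by move: (coprimep_root hc hr); rewrite hQ eqxx.
Qed.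

Definition fv (pv qv : CC) (w : P1) : CC :=
  match w with Some a => pv - a * qv | None => qv end.

Lemma fv_zero pv qv w w' : w <> w' -> fv pv qv w = 0 -> fv pv qv w' = 0 ->
  pv = 0 /\ qv = 0.
Proof.
case: w => [a|]; case: w' => [b|] //= hne h1 h2.
- have e : (b - a) * qv = (pv - a * qv) - (pv - b * qv) by ring.
  rewrite h1 h2 subrr in e.
  have hba : b - a != 0 by rewrite subr_eq0; apply/eqP => e'; apply: hne; rewrite e'.
  move/eqP: e; rewrite mulf_eq0 (negbTE hba) /= => /eqP hq.
  by split => //; move: h1; rewrite hq mulr0 subr0.
- by move: h1; rewrite h2 mulr0 subr0.
- by move: h2; rewrite h1 mulr0 subr0.
Qed.

Lemma fibre_horner P Q w z : (fibre_poly P Q w).[z] = fv P.[z] Q.[z] w.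
Proof. by case: w => [a|] //=; rewrite hornerD hornerN hornerM hornerC. Qed.

Lemma fibre_coef P Q w i : (fibre_poly P Q w)`_i = fv P`_i Q`_i w.
Proof. by case: w => [a|] //=; rewrite coefB coefCM. Qed.

Lemma mup_gt0_root (F : {poly CC}) z : (0 < mup z F)%N -> root F z.
Proof.
have [->|hF] := eqVneq F 0; first by rewrite root0.
by rewrite -XsubC_dvd // dvdp_XsubCl.
Qed.

Lemma size_le6 (F : {poly CC}) : (size F <= 7)%N -> F`_6 = 0 -> (size F <= 6)%N.
Proof.
move=> h1 h2; case: (ltngtP (size F) 7) h1 => // he _.
have : lead_coef F = 0 by rewrite lead_coefE he.
by move/eqP; rewrite lead_coef_eq0 => /eqP hF; move: he; rewrite hF size_poly0.
Qed.

Lemma disjoint (P Q : {poly CC}) w w' x : is_morphism_of_degree P Q 6 -> w <> w' ->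
  (0 < lm (fibre_poly P Q w) x)%N -> (0 < lm (fibre_poly P Q w') x)%N -> False.
Proof.
move=> hd hne; case: x => [z|] /= h1 h2.
  have /eqP r1 := mup_gt0_root h1; have /eqP r2 := mup_gt0_root h2.
  rewrite !fibre_horner in r1 r2.
  have [hp hq] := fv_zero hne r1 r2.
  by case: hd => hc _; apply: (no_common hc hp hq).
have c6 : forall w0, (0 < 6 - (size (fibre_poly P Q w0)).-1)%N -> fv P`_6 Q`_6 w0 = 0.
  move=> w0 h; rewrite -fibre_coef nth_default //.
  move: h; rewrite subn_gt0; case: (size _) => //.
have [hp hq] := fv_zero hne (c6 _ h1) (c6 _ h2).
case: hd => _ hm.
have sP : (size P <= 7)%N by rewrite -hm leq_maxl.
have sQ : (size Q <= 7)%N by rewrite -hm leq_maxr.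
have h3 := size_le6 sP hp; have h4 := size_le6 sQ hq.
have : (maxn (size P) (size Q) <= 6)%N by rewrite geq_max h3 h4.
by rewrite hm.
Qed.

Lemma fibre_neq0 (P Q : {poly CC}) w : is_morphism_of_degree P Q 6 ->
  fibre_poly P Q w != 0.
Proof.
move=> [hc hm]; apply/negP => /eqP h0.
case: w h0 => [a|] /= h0.
  have eP : P = a%:P * Q by apply/eqP; rewrite -subr_eq0 h0.
  case: (eqVneq (size Q) 1%N) => hQ.
    have : (size P <= 1)%N by rewrite eP mul_polyC -hQ size_scale_leq.
    have : (size Q <= 1)%N by rewrite hQ.
    move=> h1 h2; have : (maxn (size P) (size Q) <= 1)%N by rewrite geq_max h1 h2.
    by rewrite hm.
  have [z /eqP hz] := closed_rootP Q hQ.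
  apply: (no_common (z := z) hc _ hz).
  by rewrite eP hornerM hz mulr0.
rewrite h0 size_poly0 maxn0 in hm.
have hP : size P != 1%N by rewrite hm.
have [z /eqP hz] := closed_rootP P hP.
by apply: (no_common (z := z) hc hz); rewrite h0 horner0.
Qed.

Lemma pencil (P Q : {poly CC}) p q r : p <> q -> q <> r -> p <> r ->
  exists al be : CC, [/\ al != 0, be != 0 &
    fibre_poly P Q r = al *: fibre_poly P Q p + be *: fibre_poly P Q q].
Proof.
have neq : forall a b : CC, Some a <> Some b -> a - b != 0.
  by move=> a b h; rewrite subr_eq0; apply/eqP => e; apply: h; rewrite e.
case: p => [a|]; case: q => [b|]; case: r => [c|] //= hpq hqr hpr.
- have hab := neq _ _ hpq; have hbc := neq _ _ hqr; have hac := neq _ _ hpr.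
  exists ((c - b) / (a - b)), ((a - c) / (a - b)); split.
  + by rewrite mulf_neq0 ?invr_eq0 // -oppr_eq0 opprB.
  + by rewrite mulf_neq0 ?invr_eq0.
  + apply/polyP => i; rewrite !(coefB, coefD, coefN, coefZ, coefCM); field; exact: hab.
- have hab := neq _ _ hpq.
  exists (- (a - b)^-1), ((a - b)^-1); split.
  + by rewrite oppr_eq0 invr_eq0.
  + by rewrite invr_eq0.
  + apply/polyP => i; rewrite !(coefB, coefD, coefN, coefZ, coefCM); field; exact: hab.
- have hac := neq _ _ hpr.
  exists 1, (a - c); split => //; first exact: oner_neq0.
  apply/polyP => i; rewrite !(coefB, coefD, coefN, coefZ, coefCM); ring.
- have hbc := neq _ _ hqr.
  exists (b - c), 1; split => //; first exact: oner_neq0.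
  apply/polyP => i; rewrite !(coefB, coefD, coefN, coefZ, coefCM); ring.
Qed.
Lemma notin_m0 (m : P1 -> nat) (xs : seq P1) :
  (forall x, x \in xs <-> (0 < m x)%N) -> forall y, y \notin xs -> m y = 0%N.
Proof.
move=> h y hy; apply/eqP; rewrite -leqn0 leqNgt; apply/negP => /(proj2 (h y)).
by rewrite (negbTE hy).
Qed.

Lemma ext33 (m : P1 -> nat) (xs : seq P1) : uniq xs ->
  (forall x, x \in xs <-> (0 < m x)%N) -> perm_eq [seq m x | x <- xs] [:: 3; 3]%N ->
  exists x1 x2, [/\ x1 <> x2, m x1 = 3%N, m x2 = 3%N &
     forall y, count_mem y [:: x1; x1; x1; x2; x2; x2] = m y].
Proof.
move=> hu hmem hp.
have hs : size xs = 2%N by rewrite -(size_map m) (perm_size hp).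
have hm0 := notin_m0 hmem.
case: xs hu hmem hp hs hm0 => [|x1 [|x2 [|x3 xs]]] // hu hmem hp _ hm0.
have h1 : m x1 = 3%N.
  have : m x1 \in [:: 3; 3]%N by rewrite -(perm_mem hp) inE eqxx.
  by rewrite !inE orbb => /eqP.
have h2 : m x2 = 3%N.
  have : m x2 \in [:: 3; 3]%N by rewrite -(perm_mem hp) !inE eqxx orbT.
  by rewrite !inE orbb => /eqP.
exists x1, x2; split => //.
  by move: hu; rewrite /= inE andbT => /eqP.
move=> y; rewrite -(count_mlist _ m y hu (hm0 y)).
by rewrite /mlist /= h1 h2.
Qed.

Lemma ext222 (m : P1 -> nat) (xs : seq P1) : uniq xs ->
  (forall x, x \in xs <-> (0 < m x)%N) -> perm_eq [seq m x | x <- xs] [:: 2; 2; 2]%N ->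
  exists y1 y2 y3, [/\ m y1 = 2%N, m y2 = 2%N, m y3 = 2%N &
     forall y, count_mem y [:: y1; y1; y2; y2; y3; y3] = m y].
Proof.
move=> hu hmem hp.
have hs : size xs = 3%N by rewrite -(size_map m) (perm_size hp).
have hm0 := notin_m0 hmem.
case: xs hu hmem hp hs hm0 => [|x1 [|x2 [|x3 [|x4 xs]]]] // hu hmem hp _ hm0.
have hv : forall x, x \in [:: x1; x2; x3] -> m x = 2%N.
  move=> x hx; have : m x \in [:: 2; 2; 2]%N by rewrite -(perm_mem hp) map_f.
  by rewrite !inE orbb orbb => /eqP.
have h1 := hv x1 (mem_head _ _).
have h2 : m x2 = 2%N by apply: hv; rewrite !inE eqxx orbT.
have h3 : m x3 = 2%N by apply: hv; rewrite !inE eqxx !orbT.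
exists x1, x2, x3; split => //.
move=> y; rewrite -(count_mlist _ m y hu (hm0 y)).
by rewrite /mlist /= h1 h2 h3.
Qed.

Lemma ext321_aux (m : P1 -> nat) (z1 z2 z3 : P1) : m z1 = 3%N -> m z2 = 2%N -> m z3 = 1%N ->
  (forall y, y \notin [:: z1; z2; z3] -> m y = 0%N) ->
  forall y, count_mem y [:: z1; z1; z1; z2; z2; z3] = m y.
Proof.
move=> h1 h2 h3 h0 y.
have hu : uniq [:: z1; z2; z3].
  have n12 : z1 != z2 by apply/eqP => e; move: h1; rewrite e h2.
  have n13 : z1 != z3 by apply/eqP => e; move: h1; rewrite e h3.
  have n23 : z2 != z3 by apply/eqP => e; move: h2; rewrite e h3.
  by rewrite /= !inE !negb_or n12 n13 n23.
rewrite -(count_mlist _ m y hu (h0 y)).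
by rewrite /mlist /= h1 h2 h3.
Qed.

Lemma ext321_aux2 (m : P1 -> nat) (a b c z1 z2 z3 : P1) :
  (forall y, y \notin [:: a; b; c] -> m y = 0%N) ->
  m z1 = 3%N -> m z2 = 2%N -> m z3 = 1%N ->
  [:: z1; z2; z3] =i [:: a; b; c] ->
  forall y, count_mem y [:: z1; z1; z1; z2; z2; z3] = m y.
Proof.
move=> h0 h1 h2 h3 he; apply: ext321_aux => // y hy; apply: h0.
by rewrite -he.
Qed.

Ltac fin321 hm0 a b c z1 z2 z3 :=
  exists z1, z2, z3; (split; [done | done | done | ]);
  (apply: (ext321_aux2 hm0) => //; let y := fresh "y" in move=> y; rewrite !inE;
   by case: (y == a); case: (y == b); case: (y == c)).

Lemma ext321 (m : P1 -> nat) (xs : seq P1) : uniq xs ->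
  (forall x, x \in xs <-> (0 < m x)%N) -> perm_eq [seq m x | x <- xs] [:: 3; 2; 1]%N ->
  exists z1 z2 z3, [/\ m z1 = 3%N, m z2 = 2%N, m z3 = 1%N &
     forall y, count_mem y [:: z1; z1; z1; z2; z2; z3] = m y].
Proof.
move=> hu hmem hp.
have hs : size xs = 3%N by rewrite -(size_map m) (perm_size hp).
have hm0 := notin_m0 hmem.
case: xs hu hmem hp hs hm0 => [|a [|b [|c [|x4 xs]]]] // hu hmem hp _ hm0.
have hv : forall x, x \in [:: a; b; c] -> m x \in [:: 3; 2; 1]%N.
  by move=> x hx; rewrite -(perm_mem hp) map_f.
have ha := hv a (mem_head _ _).
have hb : m b \in [:: 3; 2; 1]%N by apply: hv; rewrite !inE eqxx orbT.
have hc : m c \in [:: 3; 2; 1]%N by apply: hv; rewrite !inE eqxx !orbT.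
move: ha hb hc; rewrite !inE => /or3P[]/eqP ha /or3P[]/eqP hb /or3P[]/eqP hc;
  try by move: hp; rewrite /= ha hb hc.
all: first [ fin321 hm0 a b c a b c | fin321 hm0 a b c a c b | fin321 hm0 a b c b a c
           | fin321 hm0 a b c b c a | fin321 hm0 a b c c a b | fin321 hm0 a b c c b a ].
Qed.
Definition la (x : P1) : CC := if x is Some _ then 1 else 0.
Definition lb (x : P1) : CC := if x is Some z then - z else 1.
Definition det2 (x y : P1) : CC := la x * lb y - lb x * la y.

Lemma det2_xx x : det2 x x = 0.
Proof. rewrite /det2; ring. Qed.

Lemma det2_neq0 x y : x <> y -> det2 x y != 0.
Proof.
case: x => [a|]; case: y => [b|] // hne.
- have -> : det2 (Some a) (Some b) = a - b by rewrite /det2 /=; ring.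
  rewrite subr_eq0; apply/eqP => e; by apply: hne; rewrite e.
- have -> : det2 (Some a) None = 1 by rewrite /det2 /=; ring.
  exact: oner_neq0.
- have -> : det2 None (Some b) = -1 by rewrite /det2 /=; ring.
  by rewrite oppr_eq0 oner_neq0.
Qed.

Lemma ell_mob x x1 x2 lam mu s :
  ell x (lb x2 * mu * s - lb x1 * lam) (- la x2 * mu * s + la x1 * lam)
  = mu * det2 x x2 * s - lam * det2 x x1.
Proof. case: x => [z|] /=; rewrite /det2 /=; ring. Qed.

Lemma eq_by (a b c d : CC) : c = d -> a - b = c - d -> a = b.
Proof. by move=> -> /eqP; rewrite subrr subr_eq0 => /eqP. Qed.

Theorem mainTheorem3 :
  ~ exists (P Q : {poly CC}) (p q r : P1),
      [/\ is_morphism_of_degree P Q 6,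
          [/\ p <> q, q <> r & p <> r],
          has_ramification P Q 6 p [:: 3; 3]%N,
          has_ramification P Q 6 q [:: 2; 2; 2]%N &
          has_ramification P Q 6 r [:: 3; 2; 1]%N].
Proof.
case=> P [Q [p [q [r [hd [hpq hqr hpr] [xs [hux hmx hpx]] [ys [huy hmy hpy]] [zs [huz hmz hpz]]]]]]].
have [x1 [x2 [hx12 hx1 hx2 cx]]] := @ext33 (lm (fibre_poly P Q p)) xs hux hmx hpx.
have [y1 [y2 [y3 [hy1 hy2 hy3 cy]]]] := @ext222 (lm (fibre_poly P Q q)) ys huy hmy hpy.
have [z1 [z2 [z3 [hz1 hz2 hz3 cz]]]] := @ext321 (lm (fibre_poly P Q r)) zs huz hmz hpz.
have HP := hom_fact _ _ (@fibre_neq0 P Q p hd) (@fibre_size P Q p hd) cx.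
have HQ := hom_fact _ _ (@fibre_neq0 P Q q hd) (@fibre_size P Q q hd) cy.
have HR := hom_fact _ _ (@fibre_neq0 P Q r hd) (@fibre_size P Q r hd) cz.
have [al [be [hal hbe hpen]]] := @pencil P Q p q r hpq hqr hpr.
have Hrel : forall X Y, hom (fibre_poly P Q r) X Y
    = al * hom (fibre_poly P Q p) X Y + be * hom (fibre_poly P Q q) X Y.
  by move=> X Y; rewrite hpen hom_lin.
have d11 : z1 <> x1.
  by move=> e; apply: (@disjoint P Q p r z1 hd hpr); [rewrite e hx1 | rewrite hz1].
have d12 : z1 <> x2.
  by move=> e; apply: (@disjoint P Q p r z1 hd hpr); [rewrite e hx2 | rewrite hz1].
have d21 : z2 <> x1.
  by move=> e; apply: (@disjoint P Q p r z2 hd hpr); [rewrite e hx1 | rewrite hz2].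
have d22 : z2 <> x2.
  by move=> e; apply: (@disjoint P Q p r z2 hd hpr); [rewrite e hx2 | rewrite hz2].
have d32 : z3 <> x2.
  by move=> e; apply: (@disjoint P Q p r z3 hd hpr); [rewrite e hx2 | rewrite hz3].
have e1 : y1 <> x2.
  by move=> e; apply: (@disjoint P Q p q y1 hd hpq); [rewrite e hx2 | rewrite hy1].
have e2 : y2 <> x2.
  by move=> e; apply: (@disjoint P Q p q y2 hd hpq); [rewrite e hx2 | rewrite hy2].
have e3 : y3 <> x2.
  by move=> e; apply: (@disjoint P Q p q y3 hd hpq); [rewrite e hx2 | rewrite hy3].
have hx21 : x2 <> x1 by move=> e; apply: hx12; rewrite e.
pose lam := det2 z1 x2; pose mu := det2 z1 x1.
have hlam : lam != 0 := det2_neq0 d12.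
have hmu : mu != 0 := det2_neq0 d11.
have nzp : lead_coef (fibre_poly P Q p) != 0 by rewrite lead_coef_eq0 fibre_neq0.
have nzr : lead_coef (fibre_poly P Q r) != 0 by rewrite lead_coef_eq0 fibre_neq0.
apply: (@core (al * lead_coef (fibre_poly P Q p) * ((mu * det2 x1 x2) * (- (lam * det2 x2 x1)))^+3)
   (be * lead_coef (fibre_poly P Q q)) (lead_coef (fibre_poly P Q r)) (mu * lam)
   (mu * det2 y1 x2) (lam * det2 y1 x1) (mu * det2 y2 x2) (lam * det2 y2 x1)
   (mu * det2 y3 x2) (lam * det2 y3 x1) (mu * det2 z2 x2) (lam * det2 z2 x1)
   (mu * det2 z3 x2) (lam * det2 z3 x1)).
- by rewrite !mulf_neq0 ?expf_neq0 ?mulf_neq0 ?oppr_eq0 ?mulf_neq0 ?det2_neq0.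
- exact: nzr.
- by rewrite mulf_neq0.
- by rewrite mulf_neq0 ?det2_neq0.
- by rewrite mulf_neq0 ?det2_neq0.
- by rewrite mulf_neq0 ?det2_neq0.
- by rewrite mulf_neq0 ?det2_neq0.
- by rewrite mulf_neq0 ?det2_neq0.
- by rewrite mulf_neq0 ?det2_neq0.
move=> s.
have E := Hrel (lb x2 * mu * s - lb x1 * lam) (- la x2 * mu * s + la x1 * lam).
rewrite HR HP HQ !big_cons big_nil !ell_mob !det2_xx in E.
apply: (eq_by E).
rewrite /lam /mu; ring.
Qed.
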